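(* Let $\Lambda$ be a source-free, finite, primitive, non-empty $k$-graph with shift $\sigma$ on $\Lambda^\infty$, and let $\varphi=(\varphi_1,\dots,\varphi_k)$ be continuous real-valued functions on $\Lambda^\infty$ satisfying $\varphi_i+\varphi_j\circ\sigma_i=\varphi_j+\varphi_i\circ\sigma_j$ for all $i,j$, such that $(\Lambda^\infty,\sigma,\varphi)$ admits a unique solution $(\boldsymbol\lambda^\varphi,\mu^\varphi)$ for the positive eigenvalue problem of the dual of the Ruelle operator. Then $\mu^\varphi(\mathcal{Z}(\lambda))>0$ for every $\lambda\in\Lambda$.
   Context: $k$-graph: countable category $\Lambda$ with degree functor $d:\Lambda\to\mathbb{N}^k$ with unique factorization. finite: each $\Lambda^n=d^{-1}(n)$ finite; source-free: $v\Lambda^n\ne\varnothing$ for every vertex $v$ and $n$; primitive: some $n\ne0$ with $v\Lambda^nw\ne\varnothing$ for all vertices $v,w$. $\Lambda^\infty$: degree-preserving functors $x:\Omega_k\to\Lambda$ ($\Omega_k=\{(m,n):m\le n\}$, $d(m,n)=n-m$), cylinder sets $\mathcal{Z}(\lambda)=\{x:x(0,d(\lambda))=\lambda\}$. Shift: $\sigma_i(x)(m,n)=x(m+\mathbf{e}_i,n+\mathbf{e}_i)$. Ruelle operator $(\mathcal{L}_{T,\psi}f)(x)=\sum_{y\in T^{-1}(x)}e^{\psi(y)}f(y)$ with dual $\mathcal{L}^*$ on finite signed Borel measures. ''Admits a unique solution...'': unique $(\boldsymbol\lambda,\mu)$ with $\boldsymbol\lambda\in(0,\infty)^k$, $\mu$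 a Borel probability measure, $\mathcal{L}^*_{\sigma_i,\varphi_i}\mu=\lambda_i\mu$ for all $i$. *)

(* Defs.v *)
From HB Require Import structures.
From mathcomp Require Import all_boot all_order all_algebra.
From mathcomp Require Import all_classical all_reals.
From mathcomp Require Import topology normedtype sequences exp measure lebesgue_integral.
Set Implicit Arguments. Unset Strict Implicit. Unset Printing Implicit Defensive.
Import numFieldTopology.Exports numFieldNormedType.Exports.
Import Order.TTheory GRing.Theory Num.Theory.
Local Open Scope classical_set_scope.
Local Open Scope ring_scope.

Definition Nk (k : nat) := {ffun 'I_k -> nat}.
Definition addNk k (m n : Nk k) : Nk k := [ffun j => (m j + n j)%N].
Definition subNk k (m n : Nk k) : Nk k := [ffun j => (m j - n j)%N].
Definition zeroNk k : Nk k := [ffun => 0%N].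
Definition eNk k (i : 'I_k) : Nk k := [ffun j => nat_of_bool (j == i)].
Definition leNk k (m n : Nk k) : bool := [forall j, (m j <= n j)%N].

(* Morphisms f with kg_src f = kg_rng g compose as kg_comp f g = f g. *)
Record kgraph (k : nat) := KGraph {
  kg_obj : countType;
  kg_mor : countType;
  kg_src : kg_mor -> kg_obj;
  kg_rng : kg_mor -> kg_obj;
  kg_id : kg_obj -> kg_mor;
  kg_comp : kg_mor -> kg_mor -> kg_mor;
  kg_deg : kg_mor -> Nk k;
  kg_src_id : forall v, kg_src (kg_id v) = v;
  kg_rng_id : forall v, kg_rng (kg_id v) = v;
  kg_src_comp : forall f g, kg_src f = kg_rng g -> kg_src (kg_comp f g) = kg_src g;
  kg_rng_comp : forall f g, kg_src f = kg_rng g -> kg_rng (kg_comp f g) = kg_rng f;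
  kg_id_l : forall f, kg_comp (kg_id (kg_rng f)) f = f;
  kg_id_r : forall f, kg_comp f (kg_id (kg_src f)) = f;
  kg_assoc : forall f g h, kg_src f = kg_rng g -> kg_src g = kg_rng h ->
    kg_comp (kg_comp f g) h = kg_comp f (kg_comp g h);
  kg_deg_id : forall v, kg_deg (kg_id v) = zeroNk k;
  kg_deg_comp : forall f g, kg_src f = kg_rng g ->
    kg_deg (kg_comp f g) = addNk (kg_deg f) (kg_deg g);
  kg_fact : forall (l : kg_mor) (m n : Nk k), kg_deg l = addNk m n ->
    exists! p : kg_mor * kg_mor,
      [/\ kg_deg p.1 = m, kg_deg p.2 = n, kg_src p.1 = kg_rng p.2
        & kg_comp p.1 p.2 = l]
}.

Section KGraphProps.
Variables (k : nat) (L : kgraph k).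

Definition kg_finite : Prop :=
  forall n : Nk k, finite_set [set l : kg_mor L | kg_deg l = n].
Definition kg_source_free : Prop :=
  forall (v : kg_obj L) (n : Nk k), exists l : kg_mor L, kg_rng l = v /\ kg_deg l = n.
Definition kg_primitive : Prop :=
  exists n : Nk k, n != zeroNk k /\
    forall v w : kg_obj L, exists l : kg_mor L,
      [/\ kg_rng l = v, kg_deg l = n & kg_src l = w].
Definition kg_nonempty : Prop := inhabited (kg_mor L).
End KGraphProps.

(* The k-graph Ω_k = {(m,n) : m <= n}, r(m,n) = m, s(m,n) = n,          *)
(* (m,n)(n,p) = (m,p), d(m,n) = n - m.                                 *)
Definition Omega (k : nat) := {p : Nk k * Nk k | leNk p.1 p.2}.
Definition om_fst k (a : Omega k) : Nk k := (sval a).1.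
Definition om_snd k (a : Omega k) : Nk k := (sval a).2.

(* x : Ω_k -> Λ is a degree-preserving functor *)
Definition is_kpath k (L : kgraph k) (x : Omega k -> kg_mor L) : Prop :=
  [/\ (forall a, kg_deg (x a) = subNk (om_snd a) (om_fst a)),
      (forall a b c : Omega k, om_fst a = om_fst c -> om_snd a = om_fst b ->
          om_snd b = om_snd c ->
          kg_src (x a) = kg_rng (x b) /\ kg_comp (x a) (x b) = x c)
    & (forall a, om_fst a = om_snd a -> x a = kg_id (kg_rng (x a)))].

Definition kpath k (L : kgraph k) := {x : Omega k -> kg_mor L | is_kpath x}.
HB.instance Definition _ k (L : kgraph k) := gen_eqMixin (kpath L).
HB.instance Definition _ k (L : kgraph k) := gen_choiceMixin (kpath L).

Definition kpath_app k (L : kgraph k) (x : kpath L) : Omega k -> kg_mor L := sval x.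

Lemma le0Nk k (n : Nk k) : leNk (zeroNk k) n.
Proof. by apply/forallP => j; rewrite ffunE. Qed.

Definition cyl k (L : kgraph k) (l : kg_mor L) : set (kpath L) :=
  [set x | kpath_app x (exist _ (zeroNk k, kg_deg l) (le0Nk (kg_deg l))) = l].

Lemma leNk_shift k (i : 'I_k) (m n : Nk k) :
  leNk m n -> leNk (addNk m (eNk i)) (addNk n (eNk i)).
Proof.
move=> /forallP H; apply/forallP => j; rewrite !ffunE leq_add2r; exact: H.
Qed.

Definition om_shift k (i : 'I_k) (a : Omega k) : Omega k :=
  exist _ (addNk (om_fst a) (eNk i), addNk (om_snd a) (eNk i))
    (leNk_shift i (svalP a)).

Lemma shift_is_kpath k (L : kgraph k) (i : 'I_k) (x : kpath L) :
  is_kpath (fun a => kpath_app x (om_shift i a)).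
Proof.
case: x => x [Hd Hc Hi]; split.
- move=> a; rewrite /kpath_app /= Hd; apply/ffunP => j.
  by rewrite /om_shift /om_fst /om_snd /= !ffunE subnDr.
- move=> a b c e1 e2 e3; apply: Hc.
  + by rewrite /om_fst /= -/(om_fst a) -/(om_fst c) e1.
  + by rewrite /om_fst /om_snd /= -/(om_snd a) -/(om_fst b) e2.
  + by rewrite /om_snd /= -/(om_snd b) -/(om_snd c) e3.
- move=> a e; apply: Hi.
  by rewrite /om_fst /om_snd /= -/(om_fst a) -/(om_snd a) e.
Qed.

Definition kshift k (L : kgraph k) (i : 'I_k) (x : kpath L) : kpath L :=
  exist _ _ (shift_is_kpath i x).

Definition kpath_open k (L : kgraph k) (U : set (kpath L)) : Prop :=
  forall x, U x -> exists l : kg_mor L, cyl l x /\ cyl l `<=` U.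

Definition kcontinuous k (L : kgraph k) (R : realType) (f : kpath L -> R) : Prop :=
  forall V : set R, open V -> kpath_open (f @^-1` V).

Definition ruelle k (L : kgraph k) (R : realType) (i : 'I_k)
    (psi f : kpath L -> R) (x : kpath L) : R :=
  \sum_(y \in [set y | kshift i y = x]) expR (psi y) * f y.

(* Λ^∞ as a pointed type (measurable types in MathComp-Analysis must be   *)
(* pointed); the point x0 is irrelevant for the σ-algebra.               *)
Definition kpathP k (L : kgraph k) (x0 : kpath L) := kpath L.
HB.instance Definition _ k (L : kgraph k) (x0 : kpath L) :=
  Choice.on (kpathP x0).
HB.instance Definition _ k (L : kgraph k) (x0 : kpath L) :=
  isPointed.Build (kpathP x0) x0.

Definition kpath_openP k (L : kgraph k) (x0 : kpath L) : set (set (kpathP x0)) :=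
  @kpath_open k L.
Arguments kpath_openP {k L} x0 _.

Definition kpathB k (L : kgraph k) (x0 : kpath L) :=
  g_sigma_algebraType (kpath_openP x0).

(* L*_{σ_i,φ_i} μ = λ_i μ, i.e. μ(L_{σ_i,φ_i} f) = λ_i μ(f) for all f ∈ C(Λ^∞). *)
Definition eigen_solution k (L : kgraph k) (R : realType) (x0 : kpath L)
    (phi : 'I_k -> kpath L -> R) (lam : 'I_k -> R)
    (mu : probability (kpathB x0) R) : Prop :=
  (forall i, 0 < lam i) /\
  forall (i : 'I_k) (f : kpath L -> R), kcontinuous f ->
    (\int[mu]_y (ruelle i (phi i) f y)%:E = (lam i)%:E * \int[mu]_y (f y)%:E)%E.
Arguments eigen_solution {k L R} x0 phi lam mu.

Definition unique_eigen_solution k (L : kgraph k) (R : realType) (x0 : kpath L)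
    (phi : 'I_k -> kpath L -> R) : Prop :=
  exists lam mu, eigen_solution x0 phi lam mu /\
    forall lam' mu', eigen_solution x0 phi lam' mu' ->
      lam' = lam /\ forall A, measurable A -> mu' A = mu A.
Arguments unique_eigen_solution {k L R} x0 phi.

(* Main.v *)
Require Import Defs.
From HB Require Import structures.
From mathcomp Require Import all_boot all_order all_algebra.
From mathcomp Require Import all_classical all_reals.
From mathcomp Require Import topology normedtype sequences exp measure lebesgue_integral.
From mathcomp Require Import ereal numfun lebesgue_measure measurable_realfun.
Set Implicit Arguments. Unset Strict Implicit. Unset Printing Implicit Defensive.
Import Order.TTheory GRing.Theory Num.Theory.
Import numFieldTopology.Exports numFieldNormedType.Exports.
Local Open Scope classical_set_scope.
Local Open Scope ring_scope.

Section Comb.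
Variables (k : nat) (L : kgraph k).
Implicit Types (l u v w e : kg_mor L) (m n p q : Nk k).

Lemma addNkC m n : addNk m n = addNk n m.
Proof. by apply/ffunP => j; rewrite !ffunE addnC. Qed.
Lemma addNkA m n p : addNk m (addNk n p) = addNk (addNk m n) p.
Proof. by apply/ffunP => j; rewrite !ffunE addnA. Qed.
Lemma addNk0 m : addNk m (zeroNk k) = m.
Proof. by apply/ffunP => j; rewrite !ffunE addn0. Qed.
Lemma add0Nk m : addNk (zeroNk k) m = m.
Proof. by apply/ffunP => j; rewrite !ffunE add0n. Qed.
Lemma addNkI m n p : addNk m n = addNk m p -> n = p.
Proof. move=> /ffunP H; apply/ffunP => j; move: (H j); rewrite !ffunE; exact: addnI. Qed.
Lemma subNkK m n : leNk m n -> addNk m (subNk n m) = n.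
Proof. move=> /forallP H; apply/ffunP => j; rewrite !ffunE subnKC //. Qed.
Lemma addNkKs m n : subNk (addNk m n) m = n.
Proof. by apply/ffunP => j; rewrite !ffunE addKn. Qed.
Lemma leNk_addr m n : leNk m (addNk m n).
Proof. by apply/forallP => j; rewrite ffunE leq_addr. Qed.
Lemma leNk_trans m n p : leNk m n -> leNk n p -> leNk m p.
Proof. move=> /forallP H1 /forallP H2; apply/forallP => j; exact: leq_trans (H1 j) (H2 j). Qed.
Lemma leNk_refl m : leNk m m.
Proof. by apply/forallP. Qed.
Lemma leNk_add2r m n p : leNk m n -> leNk (addNk m p) (addNk n p).
Proof. move=> /forallP H; apply/forallP => j; rewrite !ffunE leq_add2r; exact: H. Qed.
Lemma subNkn m : subNk m m = zeroNk k.
Proof. by apply/ffunP => j; rewrite !ffunE subnn. Qed.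

Definition fac l u v := kg_src u = kg_rng v /\ kg_comp u v = l.

Lemma fac_deg l u v : fac l u v -> kg_deg l = addNk (kg_deg u) (kg_deg v).
Proof. by case=> h <-; rewrite kg_deg_comp. Qed.

Lemma fac_uniq l u1 v1 u2 v2 : kg_deg u1 = kg_deg u2 ->
  fac l u1 v1 -> fac l u2 v2 -> u1 = u2 /\ v1 = v2.
Proof.
move=> du f1 f2.
have dv : kg_deg v1 = kg_deg v2.
  by apply: (@addNkI (kg_deg u1)); rewrite -(fac_deg f1) du -(fac_deg f2).
have [p [Hp Hu]] := kg_fact (fac_deg f1).
case: f1 f2 => s1 c1 [s2 c2].
have E1 : p = (u1, v1) by apply: Hu; split.
have E2 : p = (u2, v2) by apply: Hu; split => //=; rewrite -?du -?dv.
by move: E2; rewrite E1 => -[-> ->].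
Qed.

Lemma fac_ex l m n : kg_deg l = addNk m n ->
  exists u v, [/\ kg_deg u = m, kg_deg v = n & fac l u v].
Proof. by move=> /kg_fact [[u v] [[/= ? ? ? ?] _]]; exists u, v. Qed.

Lemma fac_idl l : fac l (kg_id (kg_rng l)) l.
Proof. by split; rewrite ?kg_src_id ?kg_id_l. Qed.
Lemma fac_idr l : fac l l (kg_id (kg_src l)).
Proof. by split; rewrite ?kg_rng_id ?kg_id_r. Qed.

Lemma deg0 l : kg_deg l = zeroNk k -> l = kg_id (kg_rng l).
Proof.
move=> d0; have [] := fac_uniq _ (fac_idl l) (fac_idr l).
  by rewrite kg_deg_id d0.
by move=> ->.
Qed.

Lemma fac_src l u v : fac l u v -> kg_src l = kg_src v.
Proof. by case=> h <-; rewrite kg_src_comp. Qed.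
Lemma fac_rng l u v : fac l u v -> kg_rng l = kg_rng u.
Proof. by case=> h <-; rewrite kg_rng_comp. Qed.

Lemma fac_assoc l u v w : kg_src u = kg_rng v -> kg_src v = kg_rng w ->
  l = kg_comp (kg_comp u v) w -> fac l u (kg_comp v w) /\ fac l (kg_comp u v) w.
Proof.
move=> h1 h2 ->; split; split.
- by rewrite kg_rng_comp.
- by rewrite kg_assoc.
- by rewrite kg_src_comp.
- by [].
Qed.

Definition fct l m : kg_mor L * kg_mor L :=
  match pselect (exists p : kg_mor L * kg_mor L, kg_deg p.1 = m /\ fac l p.1 p.2) with
  | left h => projT1 (cid h)
  | right _ => (l, l)
  end.

Lemma fctP l m u v : kg_deg u = m -> fac l u v -> fct l m = (u, v).
Proof.
move=> du f; rewrite /fct; case: pselect => [h|[]]; last by exists (u, v).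
case: (cid h) => [[u' v'] /= [du' f']].
by have [-> ->] := fac_uniq (etrans du' (esym du)) f' f.
Qed.

Lemma fct_spec l m : leNk m (kg_deg l) ->
  kg_deg (fct l m).1 = m /\ fac l (fct l m).1 (fct l m).2.
Proof.
move=> h; have [u [v [du _ f]]] := fac_ex (esym (subNkK h)).
by rewrite (fctP du f).
Qed.

End Comb.
Section Paths.
Variables (k : nat) (L : kgraph k).
Implicit Types (l u v w e : kg_mor L) (m n p q : Nk k) (x y : kpath L).

Definition o0 : Omega k := exist _ (zeroNk k, zeroNk k) (le0Nk _).
Definition om m n : Omega k := insubd o0 (m, n).
Definition xp x m n := kpath_app x (om m n).

Lemma omK m n : leNk m n -> om_fst (om m n) = m /\ om_snd (om m n) = n.
Proof. by move=> h; rewrite /om_fst /om_snd -[sval _]/(val (om m n)) /om insubdK. Qed.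

Lemma xpE x a : kpath_app x a = xp x (om_fst a) (om_snd a).
Proof.
rewrite /xp /om /om_fst /om_snd; congr kpath_app.
by rewrite -[sval a]/(val a) -surjective_pairing valKd.
Qed.

Lemma xp_deg x m n : leNk m n -> kg_deg (xp x m n) = subNk n m.
Proof. by move=> h; have [Hd _ _] := svalP x; rewrite /xp /kpath_app Hd; case: (omK h) => -> ->. Qed.

Lemma xp_fac x m n q : leNk m n -> leNk n q ->
  fac (xp x m q) (xp x m n) (xp x n q).
Proof.
move=> h1 h2; have [_ Hc _] := svalP x; rewrite /xp /kpath_app.
have h3 := leNk_trans h1 h2.
have [a1 a2] := omK h1; have [b1 b2] := omK h2; have [c1 c2] := omK h3.
have [s e] := Hc (om m n) (om n q) (om m q) (etrans a1 (esym c1))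
  (etrans a2 (esym b1)) (etrans b2 (esym c2)).
by split.
Qed.

Lemma xp_id x m : xp x m m = kg_id (kg_rng (xp x m m)).
Proof. by have [_ _ Hi] := svalP x; rewrite /xp /kpath_app; apply: Hi; case: (omK (leNk_refl m)) => -> ->. Qed.

Lemma xp_shift x (i : 'I_k) m n : leNk m n ->
  xp (kshift i x) m n = xp x (addNk m (eNk i)) (addNk n (eNk i)).
Proof.
move=> h; rewrite /xp /kshift /kpath_app /=; congr (sval x _); apply: val_inj.
rewrite /= /om insubdK ?insubdK //=; last exact: leNk_shift.
by case: (omK h) => -> ->.
Qed.

Lemma cylE x l : cyl l x <-> xp x (zeroNk k) (kg_deg l) = l.
Proof.
rewrite /cyl /xp /=; suff -> : om (zeroNk k) (kg_deg l) =
  exist _ (zeroNk k, kg_deg l) (le0Nk (kg_deg l)) by [].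
by apply: val_inj; rewrite /om insubdK //; exact: le0Nk.
Qed.

Lemma kpath_ext x y : (forall a, kpath_app x a = kpath_app y a) -> x = y.
Proof.
case: x => f pf; case: y => g pg /= H.
have E : f = g := funext H.
subst; congr exist; exact: Prop_irrelevance.
Qed.

Lemma xp_ext x y : (forall m n, leNk m n -> xp x m n = xp y m n) -> x = y.
Proof. by move=> H; apply: kpath_ext => a; rewrite !xpE H //; exact: (svalP a). Qed.

End Paths.
Section Mk.
Variables (k : nat) (L : kgraph k).
Implicit Types (l u v w e : kg_mor L) (m n p q : Nk k) (x y : kpath L).

Lemma subNk0 n : subNk n (zeroNk k) = n.
Proof. by apply/ffunP => j; rewrite !ffunE subn0. Qed.

Variables (g : Nk k -> kg_mor L) (Hg : forall n, kg_deg (g n) = n)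
  (Hcoh : forall m n, leNk m n -> exists w, fac (g n) (g m) w).

Lemma fct_g m n : leNk m n ->
  [/\ (fct (g n) m).1 = g m, fac (g n) (g m) (fct (g n) m).2
    & kg_deg (fct (g n) m).2 = subNk n m].
Proof.
move=> h; have [w fw] := Hcoh h.
rewrite (fctP (Hg m) fw) /=; split => //.
by have := fac_deg fw; rewrite !Hg => ->; rewrite addNkKs.
Qed.

Definition mkf (a : Omega k) := (fct (g (om_snd a)) (om_fst a)).2.

Lemma mkf_kpath : is_kpath mkf.
Proof.
split.
- by move=> a; rewrite /mkf; case: (fct_g (svalP a)).
- move=> a b c e1 e2 e3; rewrite /mkf -e1 e2 e3.
  have hab : leNk (om_fst a) (om_fst b) by rewrite -e2; exact: (svalP a).
  have hbc : leNk (om_fst b) (om_snd c) by rewrite -e3; exact: (svalP b).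
  have [_ f1 _] := fct_g hab; have [_ f2 _] := fct_g hbc.
  have [_ f3 _] := fct_g (leNk_trans hab hbc).
  set w1 := (fct _ _).2 in f1 *; set w2 := (fct _ _).2 in f2 *;
  set w3 := (fct _ _).2 in f3 *.
  have s12 : kg_src w1 = kg_rng w2 by rewrite -(fac_src f1); case: f2.
  split => //.
  have s01 : kg_src (g (om_fst a)) = kg_rng w1 by case: f1.
  have E : g (om_snd c) = kg_comp (kg_comp (g (om_fst a)) w1) w2.
    by case: f2 => _ <-; case: f1 => _ ->.
  have [f4 _] := @fac_assoc _ L _ _ _ _ s01 s12 E.
  by have [_ <-] := fac_uniq erefl f4 f3.
- move=> a e; rewrite /mkf; apply: deg0.
  by case: (fct_g (svalP a)) => _ _ ->; rewrite -/(om_fst a) -/(om_snd a) e subNkn.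
Qed.

Definition mk : kpath L := exist _ mkf mkf_kpath.

Lemma xp_mk m n : leNk m n -> xp mk m n = (fct (g n) m).2.
Proof. by move=> h; rewrite /xp /kpath_app /= /mkf; case: (omK h) => -> ->. Qed.

Lemma xp_mk0 n : xp mk (zeroNk k) n = g n.
Proof.
rewrite xp_mk ?le0Nk //.
have := fctP _ (fac_idl (g n)); rewrite kg_deg_id => ->; done.
Qed.

End Mk.

Section Concat.
Variables (k : nat) (L : kgraph k).
Implicit Types (l u v w e : kg_mor L) (m n p q : Nk k) (x y : kpath L).

Lemma rng_x0 x n : kg_rng (xp x (zeroNk k) n) = kg_rng (xp x (zeroNk k) (zeroNk k)).
Proof. exact: fac_rng (xp_fac x (leNk_refl _) (le0Nk n)). Qed.

Lemma prefix_agree x y m n N : leNk m n -> leNk n N ->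
  xp x (zeroNk k) N = xp y (zeroNk k) N -> xp x m n = xp y m n.
Proof.
move=> h1 h2 E.
have f1 := xp_fac x (le0Nk n) h2; have f2 := xp_fac y (le0Nk n) h2.
rewrite E in f1.
have [E2 _] := fac_uniq (etrans (xp_deg _ (le0Nk _)) (esym (xp_deg _ (le0Nk _)))) f1 f2.
have g1 := xp_fac x (le0Nk m) h1; have g2 := xp_fac y (le0Nk m) h1.
rewrite E2 in g1.
by have [_ ->] := fac_uniq (etrans (xp_deg _ (le0Nk _)) (esym (xp_deg _ (le0Nk _)))) g1 g2.
Qed.

Variables (x : kpath L) (e : kg_mor L)
  (Hs : kg_src e = kg_rng (xp x (zeroNk k) (zeroNk k))).

Definition hh n := kg_comp e (xp x (zeroNk k) n).

Lemma hh_fac n : fac (hh n) e (xp x (zeroNk k) n).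
Proof. by split => //; rewrite rng_x0. Qed.

Lemma hh_deg n : kg_deg (hh n) = addNk n (kg_deg e).
Proof. by rewrite (fac_deg (hh_fac n)) xp_deg ?le0Nk // subNk0 addNkC. Qed.

Lemma hh_split m n : leNk m n -> fac (hh n) (hh m) (xp x m n).
Proof.
move=> h; have [s c] := xp_fac x (le0Nk m) h.
have s1 : kg_src e = kg_rng (xp x (zeroNk k) m) by rewrite rng_x0.
have E : hh n = kg_comp (kg_comp e (xp x (zeroNk k) m)) (xp x m n).
  by rewrite /hh -c kg_assoc.
by have [_ ] := fac_assoc s1 s E.
Qed.

Definition gg n := (fct (hh n) n).1.

Lemma gg_spec n : kg_deg (gg n) = n /\ fac (hh n) (gg n) (fct (hh n) n).2.
Proof. by apply: fct_spec; rewrite hh_deg; exact: leNk_addr. Qed.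

Lemma gg_coh m n : leNk m n -> exists w, fac (gg n) (gg m) w.
Proof.
move=> h.
have [dn fn] := gg_spec n; have [dm fm] := gg_spec m.
have [u [w [du dw fuw]]] := fac_ex (etrans dn (esym (subNkK h))).
exists w; suff <- : u = gg m by [].
have f1 := hh_split h.
set rn := (fct (hh n) n).2 in fn; set rm := (fct (hh m) m).2 in fm.
have sA1 : kg_src u = kg_rng w by case: fuw.
have sA2 : kg_src w = kg_rng rn by rewrite -(fac_src fuw); case: fn.
have EA : hh n = kg_comp (kg_comp u w) rn by case: fn => _ <-; case: fuw => _ ->.
have sB1 : kg_src (gg m) = kg_rng rm by case: fm.
have sB2 : kg_src rm = kg_rng (xp x m n) by rewrite -(fac_src fm); case: f1.
have EB : hh n = kg_comp (kg_comp (gg m) rm) (xp x m n).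
  by case: f1 => _ <-; case: fm => _ ->.
have [A _] := fac_assoc sA1 sA2 EA; have [B _] := fac_assoc sB1 sB2 EB.
by have [] := fac_uniq (etrans du (esym dm)) A B.
Qed.

Definition cc : kpath L := mk (fun n => (gg_spec n).1) gg_coh.

End Concat.
Section Concat2.
Variables (k : nat) (L : kgraph k).
Implicit Types (l u v w e : kg_mor L) (m n p q : Nk k) (x y : kpath L).
Variables (x : kpath L) (e : kg_mor L)
  (Hs : kg_src e = kg_rng (xp x (zeroNk k) (zeroNk k))).

Lemma gg_shift n : gg x e (addNk n (kg_deg e)) = hh x e n.
Proof.
have f := hh_split Hs (leNk_addr n (kg_deg e)).
by rewrite /gg (fctP (hh_deg Hs n) f).
Qed.

Lemma cc0 n : xp (cc Hs) (zeroNk k) (addNk n (kg_deg e)) = hh x e n.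
Proof. by rewrite /cc xp_mk0 gg_shift. Qed.

Lemma cc_shift m n : leNk m n ->
  xp (cc Hs) (addNk m (kg_deg e)) (addNk n (kg_deg e)) = xp x m n.
Proof.
move=> h; rewrite /cc xp_mk; last exact: leNk_add2r.
rewrite gg_shift.
by rewrite (fctP (hh_deg Hs m) (hh_split Hs h)).
Qed.

End Concat2.

Section Uniq.
Variables (k : nat) (L : kgraph k).
Implicit Types (l u v w e : kg_mor L) (m n p q : Nk k) (x y : kpath L).

Lemma shift_uniq (i : 'I_k) y1 y2 :
  xp y1 (zeroNk k) (eNk i) = xp y2 (zeroNk k) (eNk i) ->
  kshift i y1 = kshift i y2 -> y1 = y2.
Proof.
move=> E0 Es; apply: xp_ext => m n h.
have hN : leNk n (addNk n (eNk i)) by exact: leNk_addr.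
apply: (prefix_agree h hN).
have hp : leNk (eNk i) (addNk n (eNk i)) by rewrite addNkC; exact: leNk_addr.
have [_ <-] := xp_fac y1 (le0Nk _) hp; have [_ <-] := xp_fac y2 (le0Nk _) hp.
have F y : xp y (eNk i) (addNk n (eNk i)) = xp (kshift i y) (zeroNk k) n.
  by rewrite xp_shift ?le0Nk // add0Nk.
by rewrite E0 !F Es.
Qed.

Lemma shift_tail (i : 'I_k) y x mu e mu' :
  kg_deg e = eNk i -> fac mu e mu' -> cyl mu y -> kshift i y = x ->
  cyl mu' x /\ xp y (zeroNk k) (eNk i) = e.
Proof.
move=> de fm /cylE cy <-.
have dm : kg_deg mu = addNk (eNk i) (kg_deg mu') by rewrite (fac_deg fm) de.
have hp : leNk (eNk i) (kg_deg mu) by rewrite dm; exact: leNk_addr.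
have f := xp_fac y (le0Nk _) hp; rewrite cy in f.
have [E1 E2] := fac_uniq (etrans (xp_deg _ (le0Nk _)) (etrans (subNk0 _) (esym de))) f fm.
split => //; apply/cylE.
by rewrite xp_shift ?le0Nk // add0Nk addNkC -dm.
Qed.

Lemma cyl_vertex x l : cyl l x -> cyl (kg_id (kg_rng l)) x.
Proof.
move=> /cylE c; apply/cylE; rewrite kg_deg_id xp_id; congr kg_id.
by rewrite -c rng_x0.
Qed.

Lemma cyl_self x n : cyl (xp x (zeroNk k) n) x.
Proof. by apply/cylE; rewrite xp_deg ?le0Nk // subNk0. Qed.

Lemma cyl_cover x : cyl (kg_id (kg_rng (xp x (zeroNk k) (zeroNk k)))) x.
Proof. by apply/cylE; rewrite kg_deg_id -xp_id. Qed.

Definition maxNk m n : Nk k := [ffun j => maxn (m j) (n j)].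

Lemma cyl_sub x l N : cyl l x -> leNk (kg_deg l) N ->
  cyl (xp x (zeroNk k) N) `<=` cyl l.
Proof.
move=> /cylE c h z /cylE; rewrite xp_deg ?le0Nk // subNk0 => E.
apply/cylE; exact: etrans (prefix_agree (le0Nk _) h E) c.
Qed.

Lemma cyl_refine x l1 l2 : cyl l1 x -> cyl l2 x ->
  exists c, cyl c x /\ cyl c `<=` cyl l1 `&` cyl l2.
Proof.
move=> c1 c2; exists (xp x (zeroNk k) (maxNk (kg_deg l1) (kg_deg l2))).
split; first exact: cyl_self.
move=> z cz; split.
- by apply: (cyl_sub c1 _ cz); apply/forallP => j; rewrite ffunE leq_maxl.
- by apply: (cyl_sub c2 _ cz); apply/forallP => j; rewrite ffunE leq_maxr.
Qed.

Lemma cyl_open l : kpath_open (cyl l).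
Proof. by move=> x cx; exists l; split. Qed.

Lemma cylC_open l : kpath_open (~` cyl l).
Proof.
move=> x ncx; exists (xp x (zeroNk k) (kg_deg l)); split; first exact: cyl_self.
move=> z /cylE; rewrite xp_deg ?le0Nk // subNk0 => E /cylE E'.
by apply: ncx; apply/cylE; rewrite -E E'.
Qed.

End Uniq.
Section Meas.
Variables (k : nat) (L : kgraph k) (R : realType) (x0 : kpath L).
Local Notation T := (kpathB x0).

Lemma open_meas (U : set (kpath L)) : kpath_open U -> measurable (U : set T).
Proof. by move=> oU; apply: sub_sigma_algebra. Qed.

Lemma kcont_meas (f : kpath L -> R) : kcontinuous f -> measurable_fun [set: T] f.
Proof.
move=> cf; apply: (measurability _ (RGenOpens.measurableE R)).
move=> _ [_ [a [b ->] <-]]; rewrite setTI; apply: open_meas; apply: cf.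
exact: interval_open.
Qed.

End Meas.
Section Ruelle.
Variables (k : nat) (L : kgraph k) (R : realType).
Implicit Types (l u v w e : kg_mor L) (m n p q : Nk k) (x y : kpath L).

Definition ff (phi : kpath L -> R) (mu : kg_mor L) (y : kpath L) : R :=
  \1_(cyl mu) y * expR (- phi y).

Lemma ff_cont phi mu : kcontinuous phi -> kcontinuous (ff phi mu).
Proof.
move=> cp V oV y /= Vy.
case: (pselect (cyl mu y)) => cy.
- have cW : continuous (fun r : R => expR (- r)).
    by move=> r; apply: continuous_comp; [exact: oppr_continuous|exact: continuous_expR].
  have oW := (continuousP _).1 cW V oV.
  have Wy : (phi @^-1` ((fun r : R => expR (- r)) @^-1` V)) y.
    by move: Vy; rewrite /ff indicE mem_set // mul1r.
  have [c1 [yc1 sub1]] := cp _ oW y Wy.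
  have [c [yc sub]] := cyl_refine yc1 cy.
  exists c; split => // z /sub [z1 z2].
  by rewrite /= /ff indicE mem_set // mul1r; exact: sub1.
- have [c [yc sub]] := cylC_open cy.
  exists c; split => // z /sub z1.
  by move: Vy; rewrite /= /ff !indicE !memNset // !mul0r.
Qed.

Lemma ruelle_ff (i : 'I_k) phi mu e mu' :
  kg_deg e = eNk i -> fac mu e mu' ->
  forall x, ruelle i phi (ff phi mu) x = \1_(cyl mu') x.
Proof.
move=> de fm x.
rewrite /ruelle indicE.
case: (pselect (cyl mu' x)) => cx; last first.
  rewrite memNset // fsbig1 // => y /= sy.
  rewrite /ff indicE memNset ?mul0r ?mulr0 //.
  by move=> cy; apply: cx; have [] := shift_tail de fm cy sy.
rewrite mem_set //.
have Hs : kg_src e = kg_rng (xp x (zeroNk k) (zeroNk k)).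
  by case: fm => -> _; move/cylE: cx => <-; rewrite rng_x0.
set y := cc Hs.
have sy : kshift i y = x.
  apply: xp_ext => m n h; rewrite xp_shift // -de; exact: cc_shift.
have cy : cyl mu y.
  apply/cylE; rewrite (fac_deg fm) addNkC cc0 /hh.
  by move/cylE: cx ->; case: fm.
rewrite -(fsbig_widen [set y] [set y0 | kshift i y0 = x]) ?fsbig_set1.
- by rewrite /ff indicE mem_set // mul1r expRN mulfV // gt_eqF // expR_gt0.
- by move=> z ->.
- move=> z [/= sz nz]; rewrite /= /ff indicE memNset ?mul0r ?mulr0 //.
  move=> cz; apply: nz; apply: (@shift_uniq _ _ i) => //; last by rewrite sz sy.
  by rewrite (shift_tail de fm cz sz).2 (shift_tail de fm cy sy).2.
Qed.

End Ruelle.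
Section Main.
Variables (k : nat) (L : kgraph k) (R : realType) (x0 : kpath L)
  (phi : 'I_k -> kpath L -> R) (lam : 'I_k -> R)
  (mu : probability (kpathB x0) R).
Hypothesis cp : forall i, kcontinuous (phi i).
Hypothesis H : eigen_solution x0 phi lam mu.

Lemma cyl_meas l : measurable (cyl l : set (kpathB x0)).
Proof. by apply: sub_sigma_algebra; exact: cyl_open. Qed.


Lemma tail_null (i : 'I_k) e m m' : kg_deg e = eNk i -> fac m e m' ->
  mu (cyl m) = 0%E -> mu (cyl m') = 0%E.
Proof.
move=> de fm h0.
have := H.2 i (ff (phi i) m) (@ff_cont _ _ _ (phi i) m (@cp i)).
rewrite (eq_integral (fun y : kpathB x0 => (\1_(cyl m' : set (kpathB x0)) y)%:E)); last first.
  by move=> y _; rewrite (@ruelle_ff _ _ _ i (phi i) m e m' de fm).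
rewrite integral_indic; last by apply: sub_sigma_algebra; exact: cyl_open.
rewrite setIT => ->.
suff -> : (\int[mu]_y (ff (phi i) m y)%:E = 0)%E by rewrite mule0.
rewrite (_ : (fun y : kpathB x0 => (ff (phi i) m y)%:E) =
   ((fun y : kpathB x0 => (ff (phi i) m y)%:E) \_ (cyl m : set (kpathB x0)))); last first.
  apply/funext => y; rewrite /patch; case: ifPn => // ny.
  by rewrite /ff indicE (negbTE ny) mul0r.
rewrite -integral_mkcond null_set_integral //.
- by apply: sub_sigma_algebra; exact: cyl_open.
- have mf := @kcont_meas k L R x0 _ (@ff_cont _ _ _ (phi i) m (@cp i)).
  have mf' := (measurable_EFinP _ _).2 mf.
  exact: measurable_funTS mf'.
- exact: measurableT.
Qed.

Lemma vertex_null l : mu (cyl l) = 0%E -> mu (cyl (kg_id (kg_src l))) = 0%E.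
Proof.
suff: forall N l, (\sum_j kg_deg l j <= N)%N ->
    mu (cyl l) = 0%E -> mu (cyl (kg_id (kg_src l))) = 0%E.
  by move=> /(_ _ l (leqnn _)).
elim=> [|N IH] {}l hN h0.
  have d0 : kg_deg l = zeroNk k.
    apply/ffunP => j; rewrite ffunE; apply/eqP; rewrite -leqn0.
    by apply: leq_trans hN; rewrite (bigD1 j) //= leq_addr.
  have E := deg0 d0; rewrite {1}E kg_src_id -E //.
have [d0|] := eqVneq (kg_deg l) (zeroNk k).
  have E := deg0 d0; rewrite {1}E kg_src_id -E //.
move=> /eqP dn.
have [i hi] : exists i, (0 < kg_deg l i)%N.
  apply: contra_notP dn => hn; apply/ffunP => j; rewrite ffunE.
  by apply/eqP; rewrite -leqn0 leqNgt; apply/negP => h; apply: hn; exists j.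
have hle : leNk (eNk i) (kg_deg l).
  by apply/forallP => j; rewrite ffunE; case: eqP => [->|] //.
have [e [m' [de _ fm]]] := fac_ex (esym (subNkK hle)).
have h1 := tail_null de fm h0.
rewrite (fac_src fm); apply: IH h1.
move: hN; rewrite (fac_deg fm) de.
rewrite (eq_bigr (fun j => eNk i j + kg_deg m' j)%N); last by move=> j _; rewrite ffunE.
rewrite big_split /= (bigD1 i) //= ffunE eqxx /=.
set a := (\sum_(_ < k | _) _)%N; set b := (\sum_(_ < k) _)%N.
move=> h; rewrite -ltnS; apply: leq_trans h.
by rewrite -addnA add1n ltnS leq_addl.
Qed.

End Main.

Theorem corollary6p9 (k : nat) (L : kgraph k) (R : realType) (x0 : kpath L)
    (phi : 'I_k -> kpath L -> R) :
  kg_source_free L -> kg_finite L -> kg_primitive L -> kg_nonempty L ->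
  (forall i, kcontinuous (phi i)) ->
  (forall i j : 'I_k, forall x : kpath L,
      phi i x + phi j (kshift i x) = phi j x + phi i (kshift j x)) ->
  unique_eigen_solution x0 phi ->
  forall (lam : 'I_k -> R) (mu : probability (kpathB x0) R),
    eigen_solution x0 phi lam mu ->
    forall l : kg_mor L, (0 < mu (cyl l))%E.
Proof.
move=> _ _ prim _ cp _ _ lam mu H l.
rewrite lt0e measure_ge0 andbT; apply/negP => /eqP h0.
have hv := @vertex_null k L R x0 phi lam mu cp H l h0.
have all0 : forall w, mu (cyl (kg_id w)) = 0%E.
  move=> w; have [n [_ Hn]] := prim; have [a [ra _ sa]] := Hn (kg_src l) w.
  have h1 : mu (cyl a) = 0%E.
    apply/eqP; rewrite -measure_le0 -hv; apply: le_measure; rewrite ?inE;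
      try exact: cyl_meas.
    by move=> z /cyl_vertex; rewrite ra.
  by rewrite -sa; exact: (@vertex_null k L R x0 phi lam mu cp H a h1).
pose F n : set (kpathB x0) :=
  if unpickle n is Some w then cyl (kg_id w) else set0.
have mF n : measurable (F n) by rewrite /F; case: unpickle => [w|]; [exact: cyl_meas|].
have := measure_sigma_subadditive mu mF measurableT.
have cov : [set: kpathB x0] `<=` \bigcup_n F n.
  move=> x _; exists (pickle (kg_rng (xp x (zeroNk k) (zeroNk k)))) => //.
  by rewrite /F pickleK; exact: cyl_cover.
move=> /(_ cov); rewrite eseries0; last first.
  move=> n _ _; rewrite /F; case: unpickle => [w|]; [exact: all0|exact: measure0].
move=> hle; have h1 : (1 <= (0 : \bar R))%E by rewrite -(probability_setT mu); exact: hle.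
by move: h1; rewrite lee_fin ler10.
Qed.
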